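(* Let $R$ be a commutative ring with identity, ${}_RM$ a finitely generated semisimple $R$-module, and $\varphi:M\to M$ an indecomposable nilpotent element of the ring $\mathrm{Hom}_R(M,M)$, with index of nilpotency $n$ ($\varphi^n=0\ne\varphi^{n-1}$). For $\psi\in\mathrm{Hom}_R(M,M)$ the following are equivalent: (1) $\psi\circ\varphi=\varphi\circ\psi$; (2) there exist $a_1,\dots,a_n\in R$ such that $a_1u+a_2\varphi(u)+\cdots+a_n\varphi^{n-1}(u)=\psi(u)$ for all $u\in M$, i.e. $\psi$ is a polynomial of $\varphi$.
   Context: A nilpotent element $s$ of a ring $S$ is decomposable if $es=se$ for some idempotent $e\in S$ with $0\ne e\ne1$, and indecomposable otherwise. *)

(* Defs.v *)
From HB Require Import structures.
From mathcomp Require Import all_boot all_order all_algebra.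
Set Implicit Arguments. Unset Strict Implicit. Unset Printing Implicit Defensive.
Import GRing.Theory.
Local Open Scope ring_scope.

Section ModDefs.
Variables (R : comPzRingType) (M : lmodType R).

Definition submodule (N : M -> Prop) : Prop :=
  [/\ N 0, (forall x y, N x -> N y -> N (x + y))
     & (forall (a : R) x, N x -> N (a *: x))].

Definition semisimple_module : Prop :=
  forall N, submodule N ->
    exists N', [/\ submodule N',
      (forall x, N x -> N' x -> x = 0)
    & (forall m, exists x y, [/\ N x, N' y & m = x + y])].

Definition fin_gen_module : Prop :=
  exists s : seq M, forall m : M,
    exists c : 'I_(size s) -> R, m = \sum_(i < size s) c i *: s`_i.

(* Endomorphism ring Hom_R(M,M): R-linear maps M -> M, ring operations are
   pointwise addition and composition. *)
Definition is_endo (f : M -> M) : Prop := linear f.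

Definition decomposable_endo (s : M -> M) : Prop :=
  exists e : M -> M, [/\ is_endo e,
    (forall x, e (e x) = e x),
    (forall x, e (s x) = s (e x)),
    ~ (forall x, e x = 0)
  & ~ (forall x, e x = x)].

Definition indecomposable_endo (s : M -> M) : Prop := ~ decomposable_endo s.

End ModDefs.

(* Main.v *)
Require Import Defs.
From HB Require Import structures.
From mathcomp Require Import all_boot all_order all_algebra.
From Stdlib Require Import IndefiniteDescription Classical.
From mathcomp Require Import zify.
Set Implicit Arguments. Unset Strict Implicit. Unset Printing Implicit Defensive.
Import GRing.Theory.
Local Open Scope ring_scope.

Section Lin.
Variables (R : comPzRingType) (M : lmodType R).

Lemma linD (f : M -> M) : is_endo f -> forall x y, f (x + y) = f x + f y.
Proof. by move=> fL x y; have := fL 1 x y; rewrite !scale1r. Qed.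

Lemma lin0 (f : M -> M) : is_endo f -> f 0 = 0.
Proof.
move=> fL; have H := linD fL 0 0; rewrite addr0 in H.
by apply/(addrI (f 0)); rewrite addr0 -H.
Qed.

Lemma linZ (f : M -> M) : is_endo f -> forall a x, f (a *: x) = a *: f x.
Proof. by move=> fL a x; have := fL a x 0; rewrite (lin0 fL) !addr0. Qed.

Lemma linN (f : M -> M) : is_endo f -> forall x, f (- x) = - f x.
Proof. by move=> fL x; rewrite -scaleN1r (linZ fL) scaleN1r. Qed.

Lemma linB (f : M -> M) : is_endo f -> forall x y, f (x - y) = f x - f y.
Proof. by move=> fL x y; rewrite (linD fL) (linN fL). Qed.

Lemma lin_sum (f : M -> M) : is_endo f -> forall k (F : 'I_k -> M),
  f (\sum_(i < k) F i) = \sum_(i < k) f (F i).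
Proof. by move=> fL k F; apply: (big_morph f (linD fL) (lin0 fL)). Qed.

Lemma iter_endo (f : M -> M) : is_endo f -> forall k, is_endo (iter k f).
Proof. by move=> fL; elim=> [|k IH] a x y //=; rewrite IH fL. Qed.

Lemma iter0 (f : M -> M) : is_endo f -> forall k, iter k f 0 = 0.
Proof. by move=> fL k; apply: lin0; apply: iter_endo. Qed.

Lemma subm_sub (N : M -> Prop) : submodule N -> forall x y, N x -> N y -> N (x - y).
Proof. by case=> N0 ND NZ x y Nx Ny; apply: ND => //; rewrite -scaleN1r; apply: NZ. Qed.

Lemma proj_ex (A B : M -> Prop) : submodule A -> submodule B ->
  (forall x, A x -> B x -> x = 0) ->
  (forall m, exists x y, [/\ A x, B y & m = x + y]) ->
  exists e : M -> M, [/\ is_endo e, (forall m, A (e m)), (forall m, B (m - e m))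
     & (forall m x y, A x -> B y -> m = x + y -> e m = x)].
Proof.
move=> sA sB AB dec.
have uniq x y x' y' : A x -> B y -> A x' -> B y' -> x + y = x' + y' -> x = x'.
  move=> Ax By Ax' By' H; apply/eqP; rewrite -subr_eq0; apply/eqP; apply: AB.
    exact: subm_sub.
  have -> : x - x' = y' - y.
    by apply/eqP; rewrite subr_eq addrAC [y' + x']addrC -H addrK.
  exact: subm_sub.
pose e m := proj1_sig (constructive_indefinite_description _ (dec m)).
have eP m : exists y, [/\ A (e m), B y & m = e m + y].
  exact: (proj2_sig (constructive_indefinite_description _ (dec m))).
have Ae m : A (e m) by case: (eP m) => y [].
have Be m : B (m - e m).
  by case: (eP m) => y [_ By Hm]; rewrite {1}Hm addrAC subrr add0r.
have ch m x y : A x -> B y -> m = x + y -> e m = x.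
  move=> Ax By Hm; apply: (uniq _ (m - e m) _ y) => //; by rewrite subrKC.
exists e; split => //.
move=> a m1 m2; apply: (ch _ _ (a *: (m1 - e m1) + (m2 - e m2))).
- by case: sA => _ AD AZ; apply: AD; [apply: AZ|].
- by case: sB => _ BD BZ; apply: BD; [apply: BZ|].
- by rewrite addrACA -scalerDr !subrKC.
Qed.

End Lin.

Lemma scalerC (R : comPzRingType) (M : lmodType R) (a b : R) (v : M) :
  a *: (b *: v) = b *: (a *: v).
Proof. by rewrite !scalerA mulrC. Qed.

Section Main.
Variables (R : comPzRingType) (M : lmodType R) (phi : M -> M) (n' : nat).
Hypotheses (ss : semisimple_module M) (phiL : is_endo phi)
  (nil : forall u, iter n'.+1 phi u = 0) (indec : indecomposable_endo phi).
Variable u0 : M.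
Hypothesis wnz : iter n' phi u0 <> 0.

Lemma indec_dich (e : M -> M) : is_endo e -> (forall x, e (e x) = e x) ->
  (forall x, e (phi x) = phi (e x)) -> (forall x, e x = 0) \/ (forall x, e x = x).
Proof.
move=> eL eI eC; apply: NNPP => H; apply: indec; exists e; split => //;
  [move=> H0; apply: H; left | move=> H0; apply: H; right]; exact: H0.
Qed.

Lemma dich (r : R) : (forall x : M, r *: x = 0) \/ (forall x : M, r *: x = 0 -> x = 0).
Proof.
pose K := fun x : M => r *: x = 0.
pose J := fun x : M => exists y, x = r *: y.
have sK : submodule K.
  split; rewrite /K /=.
  - exact: scaler0.
  - by move=> x y Kx Ky; rewrite scalerDr Kx Ky addr0.
  - by move=> a x Kx; rewrite scalerC Kx scaler0.
have sJ : submodule J.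
  split; rewrite /J /=.
  - by exists 0; rewrite scaler0.
  - by move=> x y [x' ->] [y' ->]; exists (x' + y'); rewrite scalerDr.
  - by move=> a x [x' ->]; exists (a *: x'); rewrite scalerC.
have KJ x : K x -> J x -> x = 0.
  move=> Kx [y Hy].
  pose A := fun z : M => exists s, z = s *: x.
  have sA : submodule A.
    split; rewrite /A /=.
    - by exists 0; rewrite scale0r.
    - by move=> z1 z2 [s1 ->] [s2 ->]; exists (s1 + s2); rewrite scalerDl.
    - by move=> a z [s ->]; exists (a * s); rewrite scalerA.
  have [A' [sA' AA' decA]] := ss sA.
  have [a [a' [[s ->] A'a' Hya]]] := decA y.
  apply: AA'; first by exists 1; rewrite scale1r.
  have -> : x = r *: a'.
    by rewrite Hy Hya scalerDr scalerC Kx scaler0 add0r.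
  by case: sA' => _ _ HZ; apply: HZ.
have decKJ m : exists x y, [/\ K x, J y & m = x + y].
  have [Q [sQ JQ decQ]] := ss sJ.
  have [j [q [Jj Qq ->]]] := decQ m.
  exists q, j; split => //; last by rewrite addrC.
  apply: JQ; first by exists q.
  by case: sQ => _ _ HZ; apply: HZ.
have [e [eL Ke Je ech]] := proj_ex sK sJ KJ decKJ.
have eI x : e (e x) = e x.
  by apply: (ech _ _ 0) => //; [case: sJ|rewrite addr0].
have eC x : e (phi x) = phi (e x).
  apply: (ech _ _ (phi (x - e x))).
  - by rewrite /K -(linZ phiL) Ke (lin0 phiL).
  - by case: (Je x) => y ->; exists (phi y); rewrite (linZ phiL).
  - by rewrite -(linD phiL) subrKC.
case: (indec_dich eL eI eC) => H; [right|left] => x.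
  move=> Kx; rewrite -(H x); symmetry; apply: (ech _ _ 0) => //; first by case: sJ.
  by rewrite addr0.
by rewrite -(H x); apply: Ke.
Qed.


Lemma iter_ge m : (n'.+1 <= m)%N -> forall u, iter m phi u = 0.
Proof. by move=> Hm u; rewrite -(subnK Hm) iterD nil (iter0 phiL). Qed.

Lemma indep (c : 'I_n'.+1 -> R) :
  \sum_(i < n'.+1) c i *: iter i phi u0 = 0 -> forall i (x : M), c i *: x = 0.
Proof.
move=> Hc.
suff H : forall j (i : 'I_n'.+1), (i < j)%N -> forall x : M, c i *: x = 0.
  by move=> i; apply: (H n'.+1 i (ltn_ord i)).
elim=> [//|j IH] i; rewrite ltnS leq_eqVlt => /orP [/eqP eij | lij]; last exact: IH.
case: (dich (c i)) => // inj; exfalso; apply: wnz.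
apply: inj.
have := congr1 (iter (n' - i) phi) Hc.
rewrite (iter0 phiL) (lin_sum (iter_endo phiL _)).
rewrite (bigD1 i) //=.
rewrite big1 ?addr0.
  by rewrite (linZ (iter_endo phiL _)) -iterD subnK // -ltnS.
move=> k Hk; rewrite (linZ (iter_endo phiL _)) -iterD.
have kj : (k : nat) <> i by move=> h; move/eqP: Hk; apply; apply: val_inj.
case: (ltnP k i) => lki.
  by rewrite (IH k) // -eij.
rewrite iter_ge ?scaler0 //.
have := ltn_ord i; lia.
Qed.

Lemma uniqc (c d : 'I_n'.+1 -> R) :
  \sum_(i < n'.+1) c i *: iter i phi u0 = \sum_(i < n'.+1) d i *: iter i phi u0 ->
  forall i (x : M), c i *: x = d i *: x.
Proof.
move=> H.
suff K : forall i (x : M), (c i - d i) *: x = 0.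
  by move=> i x; apply/eqP; rewrite -subr_eq0 -scalerBl; apply/eqP; apply: K.
apply: (@indep (fun i => c i - d i)).
under eq_bigr => k _ do rewrite scalerBl.
by rewrite sumrB H subrr.
Qed.

Definition C (x : M) := exists c : 'I_n'.+1 -> R, x = \sum_(i < n'.+1) c i *: iter i phi u0.

Lemma sC : submodule C.
Proof.
split.
- by exists (fun _ => 0); rewrite big1 // => i _; rewrite scale0r.
- move=> x y [c ->] [d ->]; exists (fun i => c i + d i).
  by rewrite -big_split; apply: eq_bigr => i _; rewrite scalerDl.
- move=> a x [c ->]; exists (fun i => a * c i).
  by rewrite scaler_sumr; apply: eq_bigr => i _; rewrite scalerA.
Qed.

Lemma C_iter m : C (iter m phi u0).
Proof.
case: (ltnP m n'.+1) => Hm; last first.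
  by rewrite iter_ge //; case: sC.
exists (fun i : 'I_n'.+1 => ((i : nat) == m)%:R).
rewrite (bigD1 (Ordinal Hm)) //= eqxx scale1r big1 ?addr0 // => i Hi.
have -> : ((i : nat) == m) = false.
  by apply/negbTE; apply: contra Hi => /eqP h; apply/eqP; apply: val_inj.
by rewrite scale0r.
Qed.

Lemma all_C : forall m, C m.
Proof.
have [C' [sC' CC' decC]] := ss sC.
have [pi [piL Cpi _ pich]] := proj_ex sC sC' CC' decC.
have piC x : C x -> pi x = x.
  by move=> Cx; apply: (pich _ _ 0) => //; [case: sC' | rewrite addr0].
pose cf m := proj1_sig (constructive_indefinite_description _ (Cpi m)).
have cfP m : pi m = \sum_(i < n'.+1) cf m i *: iter i phi u0.
  exact: (proj2_sig (constructive_indefinite_description _ (Cpi m))).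
pose g m := cf m ord_max *: u0.
have gL : is_endo g.
  move=> a m1 m2; rewrite /g scalerA -scalerDl.
  apply: (@uniqc (cf (a *: m1 + m2)) (fun i => a * cf m1 i + cf m2 i)).
  rewrite -!cfP piL !cfP scaler_sumr -big_split.
  by apply: eq_bigr => i _; rewrite scalerDl scalerA.
have g_iter m : g (iter m phi u0) = (m == n')%:R *: u0.
  case: (ltnP m n'.+1) => Hm; last first.
    rewrite iter_ge // (lin0 gL).
    have -> : (m == n') = false by apply/eqP; lia.
    by rewrite scale0r.
  rewrite /g eq_sym.
  apply: (@uniqc (cf (iter m phi u0)) (fun i : 'I_n'.+1 => ((i:nat) == m)%:R)).
  rewrite -cfP piC; last exact: C_iter.
  rewrite (bigD1 (Ordinal Hm)) //= eqxx scale1r big1 ?addr0 // => i Hi.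
  have -> : ((i : nat) == m) = false.
    by apply/negbTE; apply: contra Hi => /eqP h; apply/eqP; apply: val_inj.
  by rewrite scale0r.
pose e m := \sum_(k < n'.+1) iter k phi (g (iter (n' - k) phi m)).
have eL : is_endo e.
  move=> a m1 m2; rewrite /e scaler_sumr -big_split; apply: eq_bigr => k _.
  by rewrite (iter_endo phiL) gL (iter_endo phiL).
have eC x : e (phi x) = phi (e x).
  rewrite /e (lin_sum phiL) big_ord_recl big_ord_recr /=.
  rewrite subn0 -iterSr nil (lin0 gL) add0r -iterS nil addr0.
  apply: eq_bigr => i _; rewrite add0n; congr (phi (iter _ phi (g _))).
  by rewrite -iterSr /bump /= add1n -iterS subnSK.
have e_iter (j : 'I_n'.+1) : e (iter j phi u0) = iter j phi u0.
  rewrite /e (bigD1 j) //= big1 ?addr0.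
    by rewrite -iterD subnK ?g_iter ?eqxx ?scale1r // -ltnS.
  move=> k Hk; rewrite -iterD g_iter.
  have kj : (k : nat) <> j by move=> h; move/eqP: Hk; apply; apply: val_inj.
  have -> : (n' - k + j == n')%N = false.
    by apply/eqP; have := ltn_ord k; have := ltn_ord j; lia.
  by rewrite scale0r (iter0 phiL).
have eCx x : C x -> e x = x.
  move=> [c ->]; rewrite (lin_sum eL); apply: eq_bigr => i _.
  by rewrite (linZ eL) e_iter.
have Ce x : C (e x).
  exists (fun k => cf (iter (n' - k) phi x) ord_max).
  by rewrite /e /g; apply: eq_bigr => k _; rewrite (linZ (iter_endo phiL _)).
have eI x : e (e x) = e x by apply: eCx.
case: (indec_dich eL eI eC) => H m.
  exfalso; apply: wnz; have := e_iter ord0; rewrite /= H => <-.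
  by rewrite (iter0 phiL).
by rewrite -(H m).
Qed.

Lemma cyc_poly (psi : M -> M) : is_endo psi ->
  (forall u, psi (phi u) = phi (psi u)) ->
  exists a : 'I_n'.+1 -> R,
     forall u, \sum_(i < n'.+1) a i *: iter i phi u = psi u.
Proof.
move=> psiL psiC.
have psiI j u : psi (iter j phi u) = iter j phi (psi u).
  by elim: j => [|j IH] //=; rewrite psiC IH.
have [a Ha] := all_C (psi u0).
exists a => u; have [c ->] := all_C u.
rewrite (lin_sum psiL).
under [RHS]eq_bigr => j _ do rewrite (linZ psiL) psiI Ha (lin_sum (iter_endo phiL _)) scaler_sumr.
under [LHS]eq_bigr => i _ do rewrite (lin_sum (iter_endo phiL _)) scaler_sumr.
rewrite exchange_big /=; apply: eq_bigr => j _; apply: eq_bigr => i _.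
by rewrite !(linZ (iter_endo phiL _)) -!iterD scalerC addnC.
Qed.

End Main.

Theorem corollary4p9 (R : comPzRingType) (M : lmodType R)
  (phi psi : M -> M) (n : nat) :
  fin_gen_module M -> semisimple_module M ->
  is_endo phi ->
  (forall u, iter n phi u = 0) -> ~ (forall u, iter n.-1 phi u = 0) ->
  indecomposable_endo phi ->
  is_endo psi ->
  ((forall u, psi (phi u) = phi (psi u)) <->
   exists a : 'I_n -> R,
     forall u, \sum_(i < n) a i *: iter i phi u = psi u).
Proof.
move=> _ ss phiL nil nz indec psiL.
case: n nil nz => [|n'] nil nz; first by exfalso; apply: nz.
have [u0 Hu0] : exists u, iter n' phi u <> 0.
  apply: NNPP => H; apply: nz => u; apply: NNPP => H'; apply: H; by exists u.
split.
  by move=> psiC; apply: (cyc_poly ss phiL nil indec Hu0 psiL psiC).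
move=> [a Ha] u; rewrite -!Ha (lin_sum phiL); apply: eq_bigr => i _.
by rewrite (linZ phiL) -iterS iterSr.
Qed.
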